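(* Let $w\geqslant 4$ be an even integer and let $L_1$ be the graph with vertex set $\mathbb{Z}_{w+1}\cup\{\infty\}$ whose edge set consists of all pairs of distinct vertices except the pairs $\{x,-x\}$ for $x\in\{1,\dots,w/2\}$ and the pairs $\{1,\infty\}$, $\{0,2\}$, $\{1,2\}$. Then (i) $\chi'(L_1)=w$; and (ii) in any proper $w$-edge colouring of $L_1$, the set of colours that hit vertex $1$ equals the set of colours that hit vertex $2$.
   Context: $\mathbb{Z}_{w+1}$ is the additive group of integers modulo $w+1$, and $\infty$ is an extra vertex. $\chi'$ denotes chromatic index. In an edge colouring, a colour hits a vertex if some edge of that colour is incident with it. *)

(* Defs.v *)
From mathcomp Require Import all_boot all_order all_algebra.
Set Implicit Arguments. Unset Strict Implicit. Unset Printing Implicit Defensive.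
Import GRing.Theory.
Local Open Scope ring_scope.

(* A simple graph on a finite type T is given by an adjacency relation adj,
   assumed symmetric and irreflexive where relevant (L1 below is both). *)

Definition proper_edge_colouring (T : finType) (adj : rel T) (k : nat)
    (c : T -> T -> 'I_k) : Prop :=
  (forall u v, adj u v -> c u v = c v u) /\
  (forall u v1 v2, adj u v1 -> adj u v2 -> v1 != v2 -> c u v1 != c u v2).

Definition edge_colourable (T : finType) (adj : rel T) (k : nat) : Prop :=
  exists c : T -> T -> 'I_k, proper_edge_colouring adj c.

Definition chromatic_index_eq (T : finType) (adj : rel T) (k : nat) : Prop :=
  edge_colourable adj k /\ forall j, (j < k)%N -> ~ edge_colourable adj j.

Definition colours_at (T : finType) (adj : rel T) (k : nat)
    (c : T -> T -> 'I_k) (v : T) : {set 'I_k} :=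
  [set i | [exists u, adj v u && (c v u == i)]].

(* Vertex set Z_{w+1} ∪ {∞}: None is ∞, Some x is x ∈ 'Z_(w+1) (w >= 4). *)
Definition L1_vert (w : nat) := option 'Z_(w + 1).

Definition L1_nonedge (w : nat) (a b : 'Z_(w + 1)) : bool :=
  [exists x : 'Z_(w + 1),
     [&& (1 <= (x : nat))%N, ((x : nat) <= w./2)%N &
         ((a == x) && (b == - x)) || ((a == - x) && (b == x))]]
  || ((a == 0) && (b == 2%:R)) || ((a == 2%:R) && (b == 0))
  || ((a == 1) && (b == 2%:R)) || ((a == 2%:R) && (b == 1)).

Definition L1_adj (w : nat) : rel (L1_vert w) :=
  fun u v =>
    match u, v with
    | None, None => false
    | None, Some b => b != 1
    | Some a, None => a != 1
    | Some a, Some b => (a != b) && ~~ L1_nonedge a b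
    end.

(* Main.v *)
Require Import Defs.
From mathcomp Require Import all_boot all_order all_algebra zify.
Import GRing.Theory.
Local Open Scope ring_scope.
Lemma modZ (w n : nat) (hw : (1 <= w)%N) : (n %% (Zp_trunc (w+1)).+2 = n %% (w+1))%N.
Proof. by rewrite Zp_cast //; lia. Qed.
Lemma valZadd (w : nat) (a b : 'Z_(w+1)) (hw : (1 <= w)%N) : nat_of_ord (a + b)%R = (((a:nat) + (b:nat)) %% (w+1))%N.
Proof. by rewrite /= modZ. Qed.
Lemma valZlt (w : nat) (a : 'Z_(w+1)) (hw : (1 <= w)%N) : ((a:nat) < w + 1)%N.
Proof. have := ltn_ord a. have := Zp_cast (_ : 1 < w + 1)%N. move=> e. have e' := e ltac:(lia). lia. Qed.
Lemma valZnat (w n : nat) (hw : (1 <= w)%N) : ((n%:R : 'Z_(w+1)) : nat) = (n %% (w+1))%N.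
Proof. by rewrite val_Zp_nat //; lia. Qed.
Lemma even_inv (T : finType) (p : T -> T) : forall (A : {set T}),
  (forall x, x \in A -> [/\ p x \in A, p (p x) = x & p x != x]) -> ~~ odd #|A|.
Proof.
move=> A; move: {2}#|A| (erefl #|A|) => n; elim: n {-2}n (leqnn n) A => [|n IH] m hm A hA HA.
  by move: hm; rewrite leqn0 => /eqP m0; rewrite hA m0.
case: (set_0Vmem A) => [->|[x xA]]; first by rewrite cards0.
have [pxA ppx pxx] := HA x xA.
set B := A :\ x :\ p x.
have cA : #|A| = (#|B|).+2.
  rewrite (cardsD1 x A) xA (cardsD1 (p x) (A :\ x)) !inE pxx pxA /=. by [].
have HB : forall y, y \in B -> [/\ p y \in B, p (p y) = y & p y != y].
  move=> y; rewrite /B !inE => /and3P [ypx yx yA]; have [pyA ppy pyy] := HA y yA.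
  split => //; rewrite pyA andbT; apply/andP; split.
    by apply/eqP => e; move/eqP: yx; apply; rewrite -ppy e ppx.
  by apply/eqP => e; move/eqP: ypx; apply; rewrite -ppy e.
have := IH #|B| ltac:(lia) B erefl HB.
by rewrite cA /=; rewrite negbK.
Qed.

Lemma nbr_big w (v : L1_vert w) : v != Some 1 -> v != Some 2%:R ->
  exists q, forall u, u != v -> u != q -> L1_adj v u.
Proof.
case: v => [a|] h1 h2; last first.
  by exists (Some 1) => -[b|] //= _ hq.
exists (Some (if a == 0 then 2%:R else -a)) => -[b|] hb hq //=.
have ab : a != b by rewrite eq_sym; apply: contra_neq hb => ->.
have a1 : a != 1 by apply: contra_neq h1 => ->.
have a2 : a != 2%:R by apply: contra_neq h2 => ->.
have hq' : b != (if a == 0 then 2%:R else -a) by apply: contra_neq hq => ->.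
rewrite ab /= /L1_nonedge (negbTE a1) (negbTE a2) /= !orbF.
apply/norP; split; last first.
  by apply/andP => -[/eqP a0 /eqP b2]; move: hq'; rewrite a0 eqxx b2 eqxx.
apply/existsP => -[x /and3P [_ _ /orP [/andP [/eqP ax /eqP bx] | /andP [/eqP ax /eqP bx]]]].
  have bma : b = - a by rewrite bx ax.
  move: hq' ab; case: ifP => [/eqP a0 | _]; first by rewrite bma a0 oppr0 eqxx.
  by rewrite bma eqxx.
have bma : b = - a by rewrite bx ax opprK.
move: hq' ab; case: ifP => [/eqP a0 | _]; first by rewrite bma a0 oppr0 eqxx.
by rewrite bma eqxx.
Qed.

Lemma card_vert w (hw : (1 <= w)%N) : #|{: L1_vert w}| = (w + 2)%N.
Proof. rewrite card_option card_ord Zp_cast; lia. Qed.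

Lemma nbr_card w (hw : (1 <= w)%N) (v : L1_vert w) : v != Some 1 -> v != Some 2%:R ->
  (w <= #|[set u | L1_adj v u]|)%N.
Proof.
move=> h1 h2; have [q hq] := @nbr_big w v h1 h2.
have sub : ~: [set v; q] \subset [set u | L1_adj v u].
  apply/subsetP => u; rewrite !inE negb_or => /andP [uv uq]; exact: hq.
have := subset_leq_card sub.
have := cardsC [set v; q]; rewrite cards2 card_vert //.
case: (v != q) => /=; lia.
Qed.
Lemma nonedge_sym w (a b : 'Z_(w+1)) : L1_nonedge a b = L1_nonedge b a.
Proof.
rewrite /L1_nonedge.
have -> : [exists x : 'Z_(w + 1), [&& (1 <= (x : nat))%N, ((x : nat) <= w./2)%N &
         ((a == x) && (b == - x)) || ((a == - x) && (b == x))]] =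
  [exists x : 'Z_(w + 1), [&& (1 <= (x : nat))%N, ((x : nat) <= w./2)%N &
         ((b == x) && (a == - x)) || ((b == - x) && (a == x))]].
  by apply: eq_existsb => x; rewrite [X in _ && (_ && X)]orbC (andbC (b == x)) (andbC (b == -x)).
by case: [exists _, _]; case: (a == 0); case: (b == 0); case: (a == 1); case: (b == 1);
  case: (a == 2%:R); case: (b == 2%:R).
Qed.

Lemma adj_sym w (u v : L1_vert w) : L1_adj u v = L1_adj v u.
Proof. by case: u => [a|]; case: v => [b|] //=; rewrite nonedge_sym eq_sym. Qed.

Lemma adj_irr w (u : L1_vert w) : L1_adj u u = false.
Proof. by case: u => [a|] //=; rewrite eqxx. Qed.

Lemma col_inj w k (c : L1_vert w -> L1_vert w -> 'I_k)
  (hc : proper_edge_colouring (@L1_adj w) c) (v : L1_vert w) :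
  {in [set u | L1_adj v u] &, injective (c v)}.
Proof.
move=> u1 u2; rewrite !inE => h1 h2 e; apply/eqP/negPn/negP => ne.
by have := hc.2 v u1 u2 h1 h2 ne; rewrite e eqxx.
Qed.

Lemma nbr_le w k (c : L1_vert w -> L1_vert w -> 'I_k)
  (hc : proper_edge_colouring (@L1_adj w) c) (v : L1_vert w) :
  (#|[set u | L1_adj v u]| <= k)%N.
Proof.
rewrite -(card_in_imset (@col_inj w _ c hc v)).
by rewrite -[X in (_ <= X)%N](card_ord k) max_card.
Qed.

Lemma col_full w (hw : (1 <= w)%N) (c : L1_vert w -> L1_vert w -> 'I_w)
  (hc : proper_edge_colouring (@L1_adj w) c) (v : L1_vert w) : v != Some 1 -> v != Some 2%:R ->
  forall i, i \in colours_at (@L1_adj w) c v.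
Proof.
move=> h1 h2 i.
have hN := @nbr_card w hw v h1 h2.
have : c v @: [set u | L1_adj v u] == [set: 'I_w].
  rewrite eqEcard subsetT cardsT card_ord (card_in_imset (@col_inj w _ c hc v)) //.
move=> /eqP e; have : i \in c v @: [set u | L1_adj v u] by rewrite e inE.
case/imsetP => u; rewrite inE => hu ->.
by rewrite inE; apply/existsP; exists u; rewrite hu eqxx.
Qed.

Lemma Z12 w (hw : (2 <= w)%N) : (1 : 'Z_(w+1)) != 2%:R.
Proof.
apply/eqP => e; have := congr1 (@nat_of_ord _) e.
rewrite -[X in nat_of_ord X = _]/(1%:R) !val_Zp_nat; try lia.
rewrite !modn_small; lia.
Qed.

Lemma part2_aux w (hw4 : (4 <= w)%N) (hwe : ~~ odd w)
  (c : L1_vert w -> L1_vert w -> 'I_w)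
  (hc : proper_edge_colouring (@L1_adj w) c) (x y : L1_vert w) i :
  (x = Some 1 /\ y = Some 2%:R) \/ (x = Some 2%:R /\ y = Some 1) ->
  i \in colours_at (@L1_adj w) c x -> i \in colours_at (@L1_adj w) c y.
Proof.
move=> hxy hx; apply/negPn/negP => hy.
have hw : (1 <= w)%N by lia.
pose p (v : L1_vert w) := odflt v [pick u | @L1_adj w v u && (c v u == i)].
have pP : forall v u, @L1_adj w v u -> c v u = i -> p v = u.
  move=> v u h e; rewrite /p; case: pickP => [u' /andP [h' /eqP e'] | none] /=.
    by apply: (@col_inj w _ c hc v); rewrite ?inE // e e'.
  by have := none u; rewrite h e eqxx.
pose H := [set v | i \in colours_at (@L1_adj w) c v].
have HE : H = [set~ y].
  apply/setP => v; rewrite !inE; case: (eqVneq v y) => [->|vy].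
    by move: hy; rewrite inE /= => /negbTE.
  rewrite /=; apply/idP.
  case: (eqVneq v x) => [->|vx]; first by move: hx; rewrite inE.
  suff : i \in colours_at (@L1_adj w) c v by rewrite inE.
  apply: col_full => //.
    by case: hxy => -[ex ey]; [ | rewrite -ey]; rewrite -?ex.
  by case: hxy => -[ex ey]; [ rewrite -ey | ]; rewrite -?ex.
have ev : ~~ odd #|H|.
  apply: (@even_inv _ p H) => v; rewrite /H !inE => /existsP [u /andP [h /eqP e]].
  have pv := pP v u h e.
  have hu : @L1_adj w u v by rewrite adj_sym.
  have eu : c u v = i by rewrite -e hc.1.
  rewrite pv (pP u v hu eu); split => //.
    by apply/existsP; exists v; rewrite hu eu eqxx.
  by apply/eqP => uv; move: h; rewrite uv adj_irr.
move: ev; rewrite HE cardsC1 card_vert // addn2 /=.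
by rewrite hwe.
Qed.

Set Implicit Arguments. Unset Strict Implicit.
Definition hZ w : 'Z_(w+1) := ((w+2)./2)%:R.
Definition colZ w (u v : L1_vert w) : 'Z_(w+1) :=
  match u, v with
  | Some a, Some b => (a + b) * hZ w
  | Some a, None | None, Some a => if a == 0 then 1 else a
  | None, None => 0
  end.

Lemma hZ2 w (hw : (1 <= w)%N) (hwe : ~~ odd w) : hZ w * 2 = 1.
Proof.
rewrite /hZ -natrM.
have -> : ((w + 2)./2 * 2 = (w + 1) + 1)%N.
  have := odd_double_half (w + 2); rewrite oddD /= (negbTE hwe) /= -muln2; lia.
by rewrite natrD pchar_Zp ?add0r //; lia.
Qed.

Lemma Zne0 w (hw : (1 <= w)%N) (a : 'Z_(w+1)) : a != 0 -> (1 <= a)%N.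
Proof. by move=> a0; rewrite lt0n; apply: contra_neq a0 => e; apply/val_inj; rewrite /= e. Qed.

Lemma nonedge_opp w (hw : (1 <= w)%N) (hwe : ~~ odd w) (a b : 'Z_(w+1)) : a != b -> b = - a -> L1_nonedge a b.
Proof.
move=> ab bma; rewrite /L1_nonedge -!orbA; apply/orP; left.
have a0 : a != 0 by apply: contra_neq ab => a0; rewrite bma a0 oppr0.
have b0 : b != 0 by apply: contra_neq ab => b0; move: bma; rewrite b0 => /eqP; rewrite eq_sym oppr_eq0 => /eqP ->.
have a1 := @Zne0 w hw a a0; have b1 := @Zne0 w hw b b0.
have ha := @valZlt w a hw; have hb := @valZlt w b hw.
have hs : (((a : nat) + (b : nat)) %% (w + 1) = 0)%N.
  by rewrite -valZadd // bma subrr.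
case: (leqP (a : nat) w./2) => hah.
  apply/existsP; exists a; rewrite a1 hah eqxx bma eqxx //.
apply/existsP; exists b; rewrite b1 /=; apply/andP; split.
  have : ((a : nat) + (b : nat) = w + 1)%N.
    have := divn_eq ((a : nat) + (b : nat)) (w + 1); rewrite hs addn0.
    have : (((a : nat) + (b : nat)) %/ (w + 1) < 2)%N by rewrite ltn_divLR; lia.
    case: (_ %/ _)%N => [|[|//]] _; lia.
  have := odd_double_half w; rewrite (negbTE hwe) /=; lia.
by rewrite bma opprK !eqxx andbT orbT.
Qed.

Lemma colZ_sym w (u v : L1_vert w) : colZ u v = colZ v u.
Proof. by case: u => [a|]; case: v => [b|] //=; rewrite addrC. Qed.

Lemma mulh_inj w (hw : (1 <= w)%N) (hwe : ~~ odd w) (x y : 'Z_(w+1)) :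
  x * hZ w = y * hZ w -> x = y.
Proof. by move=> e; rewrite -[x]mulr1 -[y]mulr1 -(hZ2 hw hwe) !mulrA e. Qed.

Lemma colZ_nz w (hw : (1 <= w)%N) (hwe : ~~ odd w) (u v : L1_vert w) :
  @L1_adj w u v -> colZ u v != 0.
Proof.
case: u => [a|]; case: v => [b|] //=.
- move=> /andP [ab hn]; apply/eqP => e.
  have : a + b = 0 by apply: (mulh_inj hw hwe); rewrite e mul0r.
  move/eqP; rewrite addr_eq0 => /eqP bma.
  have bma' : b = - a by rewrite bma opprK.
  by move: hn; rewrite (nonedge_opp hw hwe ab bma').
- by move=> _; case: ifP => [_|/negbT //]; exact: oner_neq0.
- by move=> _; case: ifP => [_|/negbT //]; exact: oner_neq0.
Qed.

Lemma colZ_key w (hw : (1 <= w)%N) (hwe : ~~ odd w) (a b : 'Z_(w+1)) :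
  @L1_adj w (Some a) (Some b) -> (a + b) * hZ w != (if a == 0 then 1 else a).
Proof.
move=> /andP [ab hn]; apply/eqP; case: (eqVneq a 0) => [a0|a0] e.
  rewrite a0 add0r in e.
  have := congr1 (fun t => t * 2%:R) e; rewrite /= -mulrA (hZ2 hw hwe) mulr1 mul1r => b2.
  by move: hn; rewrite a0 b2 /L1_nonedge !eqxx /= !orbT.
have : a + b = a + a.
  by have := congr1 (fun t => t * 2%:R) e; rewrite /= -mulrA (hZ2 hw hwe) mulr1 mulr_natr mulr2n.
by move/addrI => ba; move: ab; rewrite ba eqxx.
Qed.

Lemma colZ_inj w (hw : (1 <= w)%N) (hwe : ~~ odd w) (u v1 v2 : L1_vert w) :
  @L1_adj w u v1 -> @L1_adj w u v2 -> colZ u v1 = colZ u v2 -> v1 = v2.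
Proof.
case: u => [a|]; case: v1 => [b1|]; case: v2 => [b2|] //= h1 h2.
- by move/(mulh_inj hw hwe)/addrI => ->.
- by move=> e; move: (colZ_key hw hwe h1); rewrite e eqxx.
- by move=> e; move: (colZ_key hw hwe h2); rewrite e eqxx.
case: (eqVneq b1 0) => [->|n1]; case: (eqVneq b2 0) => [->|n2] //= e.
- by move: h2; rewrite -e eqxx.
- by move: h1; rewrite e eqxx.
- by rewrite e.
Qed.

Theorem lemma12 (w : nat) (hw4 : (4 <= w)%N) (hwe : ~~ odd w) :
  chromatic_index_eq (@L1_adj w) w /\
  (forall c : L1_vert w -> L1_vert w -> 'I_w,
     proper_edge_colouring (@L1_adj w) c ->
     colours_at (@L1_adj w) c (Some 1) = colours_at (@L1_adj w) c (Some 2%:R)).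
Proof.
have hw : (1 <= w)%N by lia.
split; last first.
  move=> c hc; apply/setP => i; apply/idP/idP; apply: part2_aux => //; by [left | right].
split.
  pose d : 'I_w := Ordinal hw.
  pose cc (u v : L1_vert w) : 'I_w := insubd d (nat_of_ord (colZ u v)).-1.
  exists cc; split.
    by move=> u v h; rewrite /cc colZ_sym.
  move=> u v1 v2 h1 h2 ne; apply/eqP => e.
  have := congr1 val e; rewrite !val_insubd.
  have l1 := valZlt w (colZ u v1) hw; have l2 := valZlt w (colZ u v2) hw.
  have z1 := Zne0 hw (colZ_nz hw hwe h1); have z2 := Zne0 hw (colZ_nz hw hwe h2).
  rewrite !ifT; try lia.
  move=> e'; have : colZ u v1 = colZ u v2 by apply/val_inj => /=; lia.
  by move/(colZ_inj hw hwe h1 h2) => E; move: ne; rewrite E eqxx.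
move=> j hj [c hc].
have := @nbr_le w j c hc None.
have := @nbr_card w hw None erefl erefl.
lia.
Qed.
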